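(* Let $\phi$ be a $C^\infty$ function on $\mathbb{R}$ supported in $[-1,1]$ with $\phi\ge0$ and $\int_{-1}^1\phi(t)\,dt=1$. For a function $f$ on $(0,\infty)$ and $\varepsilon>0$ define $f_\varepsilon(x):=\int_{-1}^1\phi(t)f(xe^{-\varepsilon t})\,dt$ for $x\in(0,\infty)$. If $f\in\mathcal{F}_\mathrm{convex}^\nearrow(0,\infty)$, then $f_\varepsilon\in\mathcal{F}_\mathrm{convex}^\nearrow(0,\infty)$ for every $\varepsilon>0$ and $\hat f_\varepsilon\to\hat f$ as $\varepsilon\searrow0$ uniformly on every bounded closed interval of $(0,\infty)$. If $f\in\mathcal{F}_\mathrm{concave}^\nearrow(0,\infty)$, then $f_\varepsilon\in\mathcal{F}_\mathrm{concave}^\nearrow(0,\infty)$ for every $\varepsilon>0$ and $\check f_\varepsilon\to\check f$ as $\varepsilon\searrow0$ uniformly on every bounded closed interval of $(0,\infty)$.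
   Context: $\mathcal{F}_\mathrm{convex}^\nearrow(0,\infty)$ is the set of non-decreasing convex real functions $f$ on $(0,\infty)$ with $\lim_{x\to\infty}f(x)/x=+\infty$; for such $f$, $\hat f(t):=\sup_{x>0}\{xt-f(x)\}$, $t>0$. $\mathcal{F}_\mathrm{concave}^\nearrow(0,\infty)$ is the set of non-decreasing concave real functions $f$ on $(0,\infty)$ with $\lim_{x\to\infty}f(x)/x=0$; for such $f$, $\check f(t):=\inf_{x>0}\{xt-f(x)\}$, $t>0$. *)

(* Defs.v *)
From Stdlib Require Import Reals.
From Coquelicot Require Import Coquelicot.
Open Scope R_scope.

Definition F_convex_incr (f : R -> R) : Prop :=
  (forall x y, 0 < x -> x <= y -> f x <= f y) /\
  (forall x y l, 0 < x -> 0 < y -> 0 <= l <= 1 ->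
      f (l * x + (1 - l) * y) <= l * f x + (1 - l) * f y) /\
  is_lim (fun x => f x / x) p_infty p_infty.

Definition F_concave_incr (f : R -> R) : Prop :=
  (forall x y, 0 < x -> x <= y -> f x <= f y) /\
  (forall x y l, 0 < x -> 0 < y -> 0 <= l <= 1 ->
      l * f x + (1 - l) * f y <= f (l * x + (1 - l) * y)) /\
  is_lim (fun x => f x / x) p_infty 0.

(* hat f (t) = sup_{x>0} (x t - f x)  (finite for f in F_convex_incr) *)
Definition conv_hat (f : R -> R) (t : R) : R :=
  real (Lub_Rbar (fun y => exists x, 0 < x /\ y = x * t - f x)).

(* check f (t) = inf_{x>0} (x t - f x)  (finite for f in F_concave_incr) *)
Definition conc_check (f : R -> R) (t : R) : R :=
  real (Glb_Rbar (fun y => exists x, 0 < x /\ y = x * t - f x)).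

Definition mollify (phi f : R -> R) (eps : R) (x : R) : R :=
  RInt (fun t => phi t * f (x * exp (- (eps * t)))) (-1) 1.

Definition mollifier (phi : R -> R) : Prop :=
  (forall n x, ex_derive_n phi n x) /\
  (forall t, (t < -1 \/ 1 < t) -> phi t = 0) /\
  (forall t, 0 <= phi t) /\
  RInt phi (-1) 1 = 1.

Definition unif_cvg_right0_compact (g : R -> R -> R) (g0 : R -> R) : Prop :=
  forall a b, 0 < a -> a <= b ->
  forall e, 0 < e -> exists delta, 0 < delta /\
    forall eps, 0 < eps < delta -> forall t, a <= t <= b ->
      Rabs (g eps t - g0 t) < e.

(* Main.v *)
Require Import Defs.
From Stdlib Require Import Reals Lra Psatz.
From Coquelicot Require Import Coquelicot.
Open Scope R_scope.

Definition cvx (g : R -> R) : Prop := forall x y l, 0 < x -> 0 < y -> 0 <= l <= 1 ->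
      g (l * x + (1 - l) * y) <= l * g x + (1 - l) * g y.

Lemma F3 g p q r : cvx g -> 0 < p -> p < q -> q < r ->
  (r - p) * g q <= (r - q) * g p + (q - p) * g r.
Proof.
  intros Hc Hp Hpq Hqr.
  set (l := (r - q) / (r - p)).
  assert (Hl : 0 <= l <= 1).
  { unfold l; split.
    - apply Rdiv_le_0_compat; lra.
    - apply Rmult_le_reg_r with (r - p); [lra|]. unfold Rdiv.
      rewrite Rmult_assoc, Rinv_l; lra. }
  assert (Eq : q = l * p + (1 - l) * r) by (unfold l; field; lra).
  pose proof (Hc p r l Hp ltac:(lra) Hl) as H. rewrite <- Eq in H.
  assert (E1 : (r - p) * (l * g p + (1 - l) * g r) = (r - q) * g p + (q - p) * g r)
    by (unfold l; field; lra).
  rewrite <- E1. apply Rmult_le_compat_l; lra.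
Qed.

Lemma cvx_cont g x0 : cvx g -> 0 < x0 -> continuous g x0.
Proof.
  intros Hc Hx0. apply continuity_pt_filterlim.
  unfold continuity_pt, continue_in, limit1_in, limit_in. intros eps Heps.
  set (d := x0 / 2). set (c := x0 + d). set (a := x0 - d).
  set (P := Rabs (g c - g x0)). set (Q := Rabs (g x0 - g a)).
  assert (Hd : 0 < d) by (unfold d; lra).
  assert (HP : 0 <= P) by apply Rabs_pos. assert (HQ : 0 <= Q) by apply Rabs_pos.
  set (K := P + Q + 1).
  exists (Rmin d (eps * d / K)). split.
  { apply Rmin_glb_lt; [lra|]. unfold K. apply Rdiv_lt_0_compat; nra. }
  intros y [_ Hy]. simpl in *. unfold R_dist in *.
  assert (Hy1 : Rabs (y - x0) < d) by (eapply Rlt_le_trans; [apply Hy| apply Rmin_l]).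
  assert (Hy2 : Rabs (y - x0) < eps * d / K) by (eapply Rlt_le_trans; [apply Hy| apply Rmin_r]).
  destruct (Rabs_def2 _ _ Hy1) as [Hb1 Hb2].
  assert (Hgp : g c - g x0 <= P) by apply Rle_abs.
  assert (Hgp' : -(g c - g x0) <= P) by (unfold P, Q; rewrite <- Rabs_Ropp; apply Rle_abs).
  assert (Hgq : g x0 - g a <= Q) by apply Rle_abs.
  assert (Hgq' : -(g x0 - g a) <= Q) by (unfold P, Q; rewrite <- Rabs_Ropp; apply Rle_abs).
  assert (Main : d * Rabs (g y - g x0) <= Rabs (y - x0) * (P + Q)).
  { destruct (Rtotal_order y x0) as [Hlt | [Heq | Hgt]].
    - rewrite (Rabs_left (y - x0)) by lra.
      pose proof (F3 g a y x0 Hc ltac:(unfold a, c, d in *; lra) ltac:(unfold a, c, d in *; lra) ltac:(unfold a, c, d in *; lra)) as H1.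
      pose proof (F3 g y x0 c Hc ltac:(unfold a, c, d in *; lra) ltac:(unfold a, c, d in *; lra) ltac:(unfold a, c, d in *; lra)) as H2.
      unfold c, a in *.

      assert (E: d * Rabs (g y - g x0) = Rabs (d * (g y - g x0)))
        by (rewrite Rabs_mult, (Rabs_pos_eq d); lra).
      rewrite E. apply Rabs_le. split; nra.
    - subst. replace (g x0 - g x0) with 0 by ring. rewrite Rabs_R0. 
      replace (x0 - x0) with 0 by ring. rewrite Rabs_R0. lra.
    - rewrite (Rabs_pos_eq (y - x0)) by lra.
      pose proof (F3 g x0 y c Hc ltac:(unfold a, c, d in *; lra) ltac:(unfold a, c, d in *; lra) ltac:(unfold a, c, d in *; lra)) as H1.
      pose proof (F3 g a x0 y Hc ltac:(unfold a, c, d in *; lra) ltac:(unfold a, c, d in *; lra) ltac:(unfold a, c, d in *; lra)) as H2.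
      unfold c, a in *.
      assert (E: d * Rabs (g y - g x0) = Rabs (d * (g y - g x0)))
        by (rewrite Rabs_mult, (Rabs_pos_eq d); lra).
      rewrite E. apply Rabs_le. split; nra. }
  assert (HK : 0 < K) by (unfold K; lra).
  assert (T : Rabs (y - x0) * (P + Q) <= Rabs (y - x0) * K)
    by (apply Rmult_le_compat_l; [apply Rabs_pos | unfold K; lra]).
  assert (T2 : Rabs (y - x0) * K < eps * d).
  { apply Rmult_lt_compat_r with (r := K) in Hy2; [|lra].
    unfold Rdiv in Hy2. rewrite Rmult_assoc, Rinv_l in Hy2; lra. }
  nra.
Qed.

Notation cont g t := (@continuous R_UniformSpace R_UniformSpace g t).

Lemma exp_le a b : a <= b -> exp a <= exp b.
Proof. intros [H|H]; [left; apply exp_increasing; exact H| subst; lra]. Qed.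

Lemma conc_cvx f : (forall x y l, 0 < x -> 0 < y -> 0 <= l <= 1 ->
      l * f x + (1 - l) * f y <= f (l * x + (1 - l) * y)) -> cvx (fun x => - f x).
Proof. intros H x y l Hx Hy Hl. pose proof (H x y l Hx Hy Hl). lra. Qed.

Lemma opp_cont (f : R -> R) (x : R) : cont (fun x => - f x) x -> cont f x.
Proof.
  intros H. apply (@continuous_opp _ _ R_NormedModule) in H.
  eapply continuous_ext; [|exact H]. intros z. simpl. unfold opp; simpl; ring.
Qed.

Lemma exd_cont (g : R -> R) (t : R) : ex_derive g t -> cont g t.
Proof. apply (@ex_derive_continuous R_AbsRing R_NormedModule). Qed.

Lemma phi_cont phi : mollifier phi -> forall t, cont phi t.
Proof. intros [Hd _] t. apply exd_cont. exact (Hd 1%nat t). Qed.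

Lemma integrand_cont phi f eps x : mollifier phi -> (forall y, 0 < y -> cont f y) ->
  0 < x -> forall t, cont (fun t => phi t * f (x * exp (- (eps * t)))) t.
Proof.
  intros Hm Hf Hx t.
  apply (continuous_mult phi (fun t => f (x * exp (- (eps * t))))).
  - apply phi_cont; auto.
  - apply (continuous_comp (fun t => x * exp (- (eps * t))) f).
    + apply exd_cont. auto_derive. auto.
    + apply Hf. apply Rmult_lt_0_compat; [exact Hx| apply exp_pos].
Qed.

Lemma const_cont phi C : mollifier phi -> forall t, cont (fun t => phi t * C) t.
Proof.
  intros Hm t. apply (continuous_mult phi (fun _ => C)).
  - apply phi_cont; auto.
  - apply continuous_const.
Qed.

Lemma ex_RInt_all (g : R -> R) : (forall t, cont g t) -> ex_RInt (V:=R_NormedModule) g (-1) 1.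
Proof. intros H. apply (@ex_RInt_continuous R_CompleteNormedModule). intros; apply H. Qed.

Lemma RInt_le' g1 g2 : (forall t, cont g1 t) -> (forall t, cont g2 t) ->
  (forall t, -1 < t < 1 -> g1 t <= g2 t) -> RInt g1 (-1) 1 <= RInt g2 (-1) 1.
Proof.
  intros H1 H2 H. apply RInt_le; [lra | apply ex_RInt_all; auto | apply ex_RInt_all; auto | exact H].
Qed.

Lemma RInt_phi_const phi C : mollifier phi -> RInt (fun t => phi t * C) (-1) 1 = C.
Proof.
  intros Hm. pose proof Hm as [_ [_ [_ Hi]]].
  transitivity (RInt (V:=R_CompleteNormedModule) (fun t => scal C (phi t)) (-1) 1).
  - apply RInt_ext. intros. unfold scal; simpl. unfold mult; simpl. ring.
  - rewrite (RInt_scal (V:=R_CompleteNormedModule)).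
    + rewrite Hi. unfold scal; simpl. unfold mult; simpl. ring.
    + apply ex_RInt_all. apply phi_cont; auto.
Qed.

Lemma moll_bounds phi f eps x : mollifier phi ->
  (forall x y, 0 < x -> x <= y -> f x <= f y) -> (forall y, 0 < y -> cont f y) ->
  0 < eps -> 0 < x ->
  f (x * exp (- eps)) <= mollify phi f eps x <= f (x * exp eps).
Proof.
  intros Hm Hmono Hf He Hx. pose proof Hm as [_ [_ [Hpos _]]].
  unfold mollify. split.
  - rewrite <- (RInt_phi_const phi (f (x * exp (- eps)))) at 1 by auto.
    apply RInt_le'; [apply const_cont; auto| apply integrand_cont; auto|].
    intros t Ht. apply Rmult_le_compat_l; [apply Hpos|].
    apply Hmono. apply Rmult_lt_0_compat; [lra| apply exp_pos].
    apply Rmult_le_compat_l; [lra|]. apply exp_le. nra.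
  - rewrite <- (RInt_phi_const phi (f (x * exp eps))) by auto.
    apply RInt_le'; [apply integrand_cont; auto| apply const_cont; auto|].
    intros t Ht. apply Rmult_le_compat_l; [apply Hpos|].
    apply Hmono. apply Rmult_lt_0_compat; [lra| apply exp_pos].
    apply Rmult_le_compat_l; [lra|]. apply exp_le. nra.
Qed.

Lemma moll_mono phi f eps : mollifier phi ->
  (forall x y, 0 < x -> x <= y -> f x <= f y) -> (forall y, 0 < y -> cont f y) ->
  forall x y, 0 < x -> x <= y -> mollify phi f eps x <= mollify phi f eps y.
Proof.
  intros Hm Hmono Hf x y Hx Hxy. pose proof Hm as [_ [_ [Hpos _]]].
  unfold mollify. apply RInt_le'; [apply integrand_cont; auto| apply integrand_cont; auto; lra|].
  intros t Ht. apply Rmult_le_compat_l; [apply Hpos|].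
  apply Hmono. apply Rmult_lt_0_compat; [lra| apply exp_pos].
  apply Rmult_le_compat_r; [left; apply exp_pos| lra].
Qed.

Lemma RInt_lin phi f eps x y l : mollifier phi -> (forall y, 0 < y -> cont f y) -> 0 < x -> 0 < y ->
  RInt (fun t => l * (phi t * f (x * exp (- (eps * t)))) + (1 - l) * (phi t * f (y * exp (- (eps * t))))) (-1) 1
  = l * mollify phi f eps x + (1 - l) * mollify phi f eps y.
Proof.
  intros Hm Hf Hx Hy. unfold mollify.
  set (h1 := fun t => phi t * f (x * exp (- (eps * t)))).
  set (h2 := fun t => phi t * f (y * exp (- (eps * t)))).
  assert (I1 : ex_RInt (V:=R_NormedModule) h1 (-1) 1) by (apply ex_RInt_all; apply integrand_cont; auto).
  assert (I2 : ex_RInt (V:=R_NormedModule) h2 (-1) 1) by (apply ex_RInt_all; apply integrand_cont; auto).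
  transitivity (RInt (V:=R_CompleteNormedModule) (fun t => plus (scal l (h1 t)) (scal (1-l) (h2 t))) (-1) 1).
  { apply RInt_ext; intros; reflexivity. }
  rewrite (RInt_plus (V:=R_CompleteNormedModule)).
  - rewrite (RInt_scal (V:=R_CompleteNormedModule)) by exact I1.
    rewrite (RInt_scal (V:=R_CompleteNormedModule)) by exact I2.
    reflexivity.
  - apply (ex_RInt_scal (V:=R_NormedModule)). exact I1.
  - apply (ex_RInt_scal (V:=R_NormedModule)). exact I2.
Qed.

Lemma exp_facts eps : 0 < eps -> exp (- eps) * exp eps = 1 /\ 0 < exp (- eps) < 1 /\ 1 < exp eps.
Proof.
  intros He. rewrite exp_Ropp. split; [field; apply Rgt_not_eq, exp_pos|].
  assert (1 < exp eps) by (rewrite <- exp_0; apply exp_increasing; lra).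
  split; [split|exact H].
  - apply Rinv_0_lt_compat, exp_pos.
  - rewrite <- Rinv_1. apply Rinv_lt_contravar; lra.
Qed.

Lemma lin_cont (g1 g2 : R -> R) a b t : cont g1 t -> cont g2 t ->
  cont (fun t => a * g1 t + b * g2 t) t.
Proof.
  intros H1 H2.
  apply (continuous_plus (V:=R_NormedModule) (fun t => a * g1 t) (fun t => b * g2 t)).
  - apply (continuous_mult (fun _ => a) g1); [apply continuous_const| exact H1].
  - apply (continuous_mult (fun _ => b) g2); [apply continuous_const| exact H2].
Qed.

Lemma div_lt_l M a x : 0 < x -> M * x < a -> M < a / x.
Proof. intros Hx H. apply (Rmult_lt_reg_r x); [lra|]. unfold Rdiv. rewrite Rmult_assoc, Rinv_l; lra. Qed.

Lemma moll_convex phi f eps : mollifier phi -> F_convex_incr f -> 0 < eps ->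
  F_convex_incr (mollify phi f eps).
Proof.
  intros Hm [Hmono [Hcvx Hlim]] He.
  assert (Hc : forall y, 0 < y -> cont f y) by (intros y Hy; exact (cvx_cont f y Hcvx Hy)).
  pose proof Hm as [_ [_ [Hpos _]]].
  split; [apply moll_mono; auto|]. split.
  - intros x y l Hx Hy Hl. rewrite <- RInt_lin by auto. unfold mollify.
    apply RInt_le'.
    + apply integrand_cont; auto. nra.
    + intros t. apply lin_cont; apply integrand_cont; auto.
    + intros t Ht.
      replace ((l * x + (1 - l) * y) * exp (- (eps * t))) with
        (l * (x * exp (- (eps * t))) + (1 - l) * (y * exp (- (eps * t)))) by ring.
      pose proof (exp_pos (- (eps * t))).
      pose proof (Hcvx (x * exp (- (eps * t))) (y * exp (- (eps * t))) l
                   ltac:(nra) ltac:(nra) Hl) as H1.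
      pose proof (Hpos t). nra.
  - apply is_lim_spec. intros M. simpl.
    destruct ((proj2 (is_lim_spec _ _ _) Hlim) (M * exp eps)) as [A HA].
    destruct (exp_facts eps He) as [E [E1 E2]].
    exists (Rabs A * exp eps). intros x Hx.
    pose proof (Rabs_pos A). pose proof (Rle_abs A).
    assert (Hx0 : 0 < x) by nra.
    set (y := x * exp (- eps)).
    assert (Hy : A < y) by (unfold y; nra).
    assert (Hy0 : 0 < y) by (unfold y; nra).
    pose proof (HA y Hy) as Hq. 
    pose proof (proj1 (moll_bounds phi f eps x Hm Hmono Hc He Hx0)) as Hb. fold y in Hb.
    set (q := f y / y) in *.
    assert (Fq : f y = q * y) by (unfold q; field; lra).
    apply div_lt_l; [exact Hx0|].
    assert (M * exp eps * y < q * y) by (apply Rmult_lt_compat_r; lra).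
    assert (M * exp eps * y = M * x) by (unfold y; transitivity (M * x * (exp (- eps) * exp eps)); [ring| rewrite E; ring]).
    lra.
Qed.

Lemma moll_concave phi f eps : mollifier phi -> F_concave_incr f -> 0 < eps ->
  F_concave_incr (mollify phi f eps).
Proof.
  intros Hm [Hmono [Hcvx Hlim]] He.
  assert (Hc : forall y, 0 < y -> cont f y)
    by (intros y Hy; apply opp_cont; exact (cvx_cont _ y (conc_cvx f Hcvx) Hy)).
  pose proof Hm as [_ [_ [Hpos _]]].
  split; [apply moll_mono; auto|]. split.
  - intros x y l Hx Hy Hl. rewrite <- RInt_lin by auto. unfold mollify.
    apply RInt_le'.
    + intros t. apply lin_cont; apply integrand_cont; auto.
    + apply integrand_cont; auto. nra.
    + intros t Ht.
      replace ((l * x + (1 - l) * y) * exp (- (eps * t))) with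
        (l * (x * exp (- (eps * t))) + (1 - l) * (y * exp (- (eps * t)))) by ring.
      pose proof (exp_pos (- (eps * t))).
      pose proof (Hcvx (x * exp (- (eps * t))) (y * exp (- (eps * t))) l
                   ltac:(nra) ltac:(nra) Hl) as H1.
      pose proof (Hpos t). nra.
  - apply is_lim_spec. intros eps0. simpl.
    destruct (exp_facts eps He) as [E [E1 E2]].
    assert (Hp : 0 < eps0 * exp (- eps)) by (apply Rmult_lt_0_compat; [apply cond_pos| lra]).
    destruct ((proj2 (is_lim_spec _ _ _) Hlim) (mkposreal _ Hp)) as [A HA]. simpl in HA.
    exists (Rabs A * exp eps). intros x Hx.
    pose proof (Rabs_pos A). pose proof (Rle_abs A).
    assert (Hx0 : 0 < x) by nra.
    set (y1 := x * exp (- eps)). set (y2 := x * exp eps).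
    assert (Hy1 : A < y1) by (unfold y1; nra).
    assert (Hy2 : A < y2) by (unfold y2; nra).
    assert (Hy10 : 0 < y1) by (unfold y1; nra).
    assert (Hy20 : 0 < y2) by (unfold y2; nra).
    pose proof (HA y1 Hy1) as Hq1. pose proof (HA y2 Hy2) as Hq2.
    pose proof (moll_bounds phi f eps x Hm Hmono Hc He Hx0) as [Hb1 Hb2]. fold y1 y2 in Hb1, Hb2.
    set (q1 := f y1 / y1) in *. set (q2 := f y2 / y2) in *.
    assert (F1 : f y1 = q1 * y1) by (unfold q1; field; lra).
    assert (F2 : f y2 = q2 * y2) by (unfold q2; field; lra).
    rewrite Rminus_0_r in Hq1, Hq2 |- *.
    apply Rabs_def2 in Hq1. apply Rabs_def2 in Hq2.
    set (r := mollify phi f eps x / x).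
    assert (Fr : mollify phi f eps x = r * x) by (unfold r; field; lra).
    pose proof (cond_pos eps0).
    apply Rabs_def1.
    + assert (q2 * y2 < eps0 * exp (- eps) * y2) by (apply Rmult_lt_compat_r; lra).
      assert (eps0 * exp (- eps) * y2 = eps0 * x) by (unfold y2; transitivity (eps0 * x * (exp (- eps) * exp eps)); [ring| rewrite E; ring]).
      nra.
    + assert (- (eps0 * exp (- eps)) * y1 < q1 * y1) by (apply Rmult_lt_compat_r; lra).
      assert (eps0 * exp (- eps) * y1 <= eps0 * x).
      { unfold y1. assert (Ez : eps0 * exp (- eps) * (x * exp (- eps)) = (eps0 * x) * (exp (- eps) * exp (- eps))) by ring.
        rewrite Ez. assert (exp (- eps) * exp (- eps) <= 1) by (apply Rle_trans with (exp (- eps) * 1); [apply Rmult_le_compat_l; lra | lra]).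
        assert (0 <= eps0 * x) by nra. nra. }
      nra.
Qed.

Lemma div_lt_r M a x : 0 < x -> M < a / x -> M * x < a.
Proof. intros Hx H. apply (Rmult_lt_compat_r x) in H; [|lra]. unfold Rdiv in H.
  rewrite Rmult_assoc, Rinv_l, Rmult_1_r in H; lra. Qed.

Lemma hat_spec g t M : (forall x, 0 < x -> x * t - g x <= M) ->
  (forall x, 0 < x -> x * t - g x <= conv_hat g t) /\
  (forall M', (forall x, 0 < x -> x * t - g x <= M') -> conv_hat g t <= M').
Proof.
  intros HM. unfold conv_hat.
  destruct (Lub_Rbar_correct (fun y => exists x, 0 < x /\ y = x * t - g x)) as [Hub Hlub].
  revert Hub Hlub. case (Lub_Rbar (fun y => exists x, 0 < x /\ y = x * t - g x)).
  - intros r Hub Hlub. simpl. split.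
    + intros x Hx. apply (Hub (x * t - g x)). exists x; auto.
    + intros M' HM'. apply (Hlub (Finite M')). intros y [x [Hx ->]]. simpl. apply HM'; auto.
  - intros Hub Hlub. exfalso. apply (Hlub (Finite M)). intros y [x [Hx ->]]. simpl. apply HM; auto.
  - intros Hub Hlub. exfalso. apply (Hub (1 * t - g 1)). exists 1; split; [lra|auto].
Qed.

Lemma check_spec g t M : (forall x, 0 < x -> M <= x * t - g x) ->
  (forall x, 0 < x -> conc_check g t <= x * t - g x) /\
  (forall M', (forall x, 0 < x -> M' <= x * t - g x) -> M' <= conc_check g t).
Proof.
  intros HM. unfold conc_check.
  destruct (Glb_Rbar_correct (fun y => exists x, 0 < x /\ y = x * t - g x)) as [Hlb Hglb].
  revert Hlb Hglb. case (Glb_Rbar (fun y => exists x, 0 < x /\ y = x * t - g x)).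
  - intros r Hlb Hglb. simpl. split.
    + intros x Hx. apply (Hlb (x * t - g x)). exists x; auto.
    + intros M' HM'. apply (Hglb (Finite M')). intros y [x [Hx ->]]. simpl. apply HM'; auto.
  - intros Hlb Hglb. exfalso. apply (Hlb (1 * t - g 1)). exists 1; split; [lra|auto].
  - intros Hlb Hglb. exfalso. apply (Hglb (Finite M)). intros y [x [Hx ->]]. simpl. apply HM; auto.
Qed.

Lemma cvx_lower g x : cvx g -> (forall x y, 0 < x -> x <= y -> g x <= g y) -> 0 < x ->
  2 * g 1 - g 2 <= g x.
Proof.
  intros Hc Hm Hx. pose proof (Hm 1 2 ltac:(lra) ltac:(lra)).
  destruct (Rlt_le_dec x 1) as [H1|H1].
  - pose proof (F3 g x 1 2 Hc Hx H1 ltac:(lra)). nra.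
  - pose proof (Hm 1 x ltac:(lra) H1). lra.
Qed.

Lemma hat_bdd g : F_convex_incr g -> forall t, exists M, forall x, 0 < x -> x * t - g x <= M.
Proof.
  intros [Hm [Hc Hl]] t.
  destruct ((proj2 (is_lim_spec _ _ _) Hl) (Rabs t + 1)) as [X0 HX]. simpl in HX.
  exists ((Rabs X0 + 1) * Rabs t + Rabs (2 * g 1 - g 2)). intros x Hx.
  pose proof (cvx_lower g x Hc Hm Hx). pose proof (Rle_abs t). pose proof (Rle_abs (- t)).
  rewrite Rabs_Ropp in *. pose proof (Rabs_pos t). pose proof (Rle_abs X0). pose proof (Rabs_pos X0).
  pose proof (Rle_abs (2 * g 1 - g 2)). pose proof (Rabs_pos (2 * g 1 - g 2)). pose proof (Rle_abs (- (2 * g 1 - g 2))). rewrite Rabs_Ropp in *.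
  destruct (Rlt_le_dec X0 x) as [Hx1|Hx1].
  - pose proof (div_lt_r _ _ _ Hx (HX x Hx1)).
    assert (x * t <= x * Rabs t) by (apply Rmult_le_compat_l; lra).
    assert (0 <= (Rabs X0 + 1) * Rabs t) by (apply Rmult_le_pos; lra). nra.
  - assert (x * t <= x * Rabs t) by (apply Rmult_le_compat_l; lra).
    assert (x * Rabs t <= (Rabs X0 + 1) * Rabs t) by (apply Rmult_le_compat_r; lra). lra.
Qed.

Lemma hat_mono g s s' : F_convex_incr g -> s <= s' -> conv_hat g s <= conv_hat g s'.
Proof.
  intros Hg Hs. destruct (hat_bdd g Hg s) as [M HM]. destruct (hat_bdd g Hg s') as [M' HM'].
  destruct (hat_spec g s M HM) as [_ L]. destruct (hat_spec g s' M' HM') as [U _].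
  apply L. intros x Hx. pose proof (U x Hx). nra.
Qed.

Lemma hat_lip g B : F_convex_incr g -> 0 < B -> exists K, 0 <= K /\
  forall s s', 0 < s -> s <= s' -> s' <= B -> conv_hat g s' <= conv_hat g s + K * (s' - s).
Proof.
  intros Hg HB. pose proof Hg as [Hm [Hc Hl]].
  destruct ((proj2 (is_lim_spec _ _ _) Hl) (B + 1)) as [X0 HX]. simpl in HX.
  set (X := Rabs X0 + Rabs (g 1) + 1).
  pose proof (Rle_abs X0). pose proof (Rabs_pos X0). pose proof (Rle_abs (g 1)). pose proof (Rabs_pos (g 1)).
  exists X. split; [unfold X; lra|].
  intros s s' Hs Hss' Hs'.
  destruct (hat_bdd g Hg s) as [M HM]. destruct (hat_bdd g Hg s') as [M' HM'].
  destruct (hat_spec g s M HM) as [U _]. destruct (hat_spec g s' M' HM') as [_ L].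
  apply L. intros x Hx. pose proof (U x Hx). pose proof (U 1 ltac:(lra)).
  destruct (Rle_lt_dec x X) as [Hy1|Hy1].
  - assert (x * (s' - s) <= X * (s' - s)) by (apply Rmult_le_compat_r; lra). nra.
  - assert (Hy2 : X0 < x) by (unfold X in Hy1; lra).
    pose proof (div_lt_r _ _ _ Hx (HX x Hy2)).
    assert (0 <= X * (s' - s)) by (apply Rmult_le_pos; unfold X; lra).
    assert (x * s' <= x * B) by (apply Rmult_le_compat_l; lra).
    unfold X in Hy1. nra.
Qed.

Lemma check_bdd g t : F_concave_incr g -> 0 < t -> exists M, forall x, 0 < x -> M <= x * t - g x.
Proof.
  intros [Hm [Hc Hl]] Ht.
  destruct ((proj2 (is_lim_spec _ _ _) Hl) (mkposreal t Ht)) as [X0 HX]. simpl in HX.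
  set (X := Rabs X0 + 1). pose proof (Rle_abs X0). pose proof (Rabs_pos X0).
  pose proof (Rle_abs (- g X)). rewrite Rabs_Ropp in *. pose proof (Rabs_pos (g X)).
  exists (- Rabs (g X)). intros x Hx.
  destruct (Rlt_le_dec X0 x) as [Hz1|Hz1].
  - pose proof (HX x Hz1) as Hq2. rewrite Rminus_0_r in Hq2. apply Rabs_def2 in Hq2.
    destruct Hq2 as [Hq2 _].
    assert (g x < t * x).
    { apply (Rmult_lt_compat_r x) in Hq2; [|lra]. unfold Rdiv in Hq2.
      rewrite Rmult_assoc, Rinv_l, Rmult_1_r in Hq2; lra. }
    lra.
  - pose proof (Hm x X Hx ltac:(unfold X; lra)). pose proof (Rle_abs (g X)). assert (0 < x * t) by nra. lra.
Qed.

Lemma check_mono g s s' : F_concave_incr g -> 0 < s -> s <= s' -> conc_check g s <= conc_check g s'.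
Proof.
  intros Hg Hs Hss. destruct (check_bdd g s Hg Hs) as [M HM].
  destruct (check_bdd g s' Hg ltac:(lra)) as [M' HM'].
  destruct (check_spec g s M HM) as [L _]. destruct (check_spec g s' M' HM') as [_ U].
  apply U. intros x Hx. pose proof (L x Hx). nra.
Qed.

Lemma check_lip g A B : F_concave_incr g -> 0 < A -> exists K, 0 <= K /\
  forall s s', A <= s -> s <= s' -> s' <= B -> conc_check g s' <= conc_check g s + K * (s' - s).
Proof.
  intros Hg HA. pose proof Hg as [Hm [Hc Hl]].
  assert (HA2 : 0 < A / 2) by lra.
  destruct ((proj2 (is_lim_spec _ _ _) Hl) (mkposreal _ HA2)) as [X0 HX]. simpl in HX.
  set (C := Rabs B + Rabs (g 1)).
  set (X := Rabs X0 + 2 * C / A + 1).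
  pose proof (Rle_abs X0). pose proof (Rabs_pos X0). pose proof (Rle_abs (- g 1)).
  rewrite Rabs_Ropp in *. pose proof (Rabs_pos (g 1)). pose proof (Rle_abs B).
  pose proof (Rabs_pos B).
  assert (HC : 0 <= C) by (unfold C; lra).
  assert (HC2 : 0 <= 2 * C / A) by (apply Rdiv_le_0_compat; lra).
  assert (HXA : X * (A / 2) = Rabs X0 * (A / 2) + C + A / 2) by (unfold X; field; lra).
  exists X. split; [unfold X; lra|].
  intros s s' Hs Hss' Hs'.
  destruct (check_bdd g s Hg ltac:(lra)) as [M HM]. destruct (check_bdd g s' Hg ltac:(lra)) as [M' HM'].
  destruct (check_spec g s' M' HM') as [L _]. destruct (check_spec g s M HM) as [_ U].
  assert (conc_check g s' - X * (s' - s) <= conc_check g s); [|lra].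
  apply U. intros x Hx. pose proof (L x Hx). pose proof (L 1 ltac:(lra)).
  assert (0 <= X * (s' - s)) by (apply Rmult_le_pos; unfold X; lra).
  destruct (Rle_lt_dec x X) as [Hy1|Hy1].
  - assert (x * (s' - s) <= X * (s' - s)) by (apply Rmult_le_compat_r; lra). nra.
  - assert (Hy2 : X0 < x) by (unfold X in Hy1; lra).
    pose proof (HX x Hy2) as Hq2. rewrite Rminus_0_r in Hq2. apply Rabs_def2 in Hq2.
    destruct Hq2 as [Hq2 _].
    assert (g x < A / 2 * x).
    { apply (Rmult_lt_compat_r x) in Hq2; [|lra]. unfold Rdiv in Hq2 |- *.
      rewrite Rmult_assoc, Rinv_l, Rmult_1_r in Hq2; lra. }
    assert (x * A <= x * s) by (apply Rmult_le_compat_l; lra).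
    assert (X * (A / 2) < x * (A / 2)) by (apply Rmult_lt_compat_r; lra).
    assert (0 <= Rabs X0 * (A / 2)) by (apply Rmult_le_pos; lra).
    assert (Rabs B + Rabs (g 1) = C) by reflexivity. lra.
Qed.

Lemma exp_diff_bound e : 0 < e <= 1/2 -> exp e - exp (- e) <= 4 * e.
Proof.
  intros He. destruct (exp_facts e ltac:(lra)) as [E [E1 E2]].
  pose proof (exp_ineq1_le (- e)).
  set (u := exp (- e)) in *. set (v := exp e) in *.
  assert (Hu : 1/2 <= u) by lra.
  assert (v * u * u - u * u <= 4 * e * u); [|nra].
  replace (v * u * u) with u by (transitivity ((u * v) * u); [rewrite E; ring| ring]).
  nra.
Qed.

Theorem hat_part phi f : mollifier phi -> F_convex_incr f ->
  unif_cvg_right0_compact (fun eps => conv_hat (mollify phi f eps)) (conv_hat f).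
Proof.
  intros Hm Hf. pose proof Hf as [Hmono [Hcvx Hlim]].
  assert (Hc : forall y, 0 < y -> cont f y) by (intros y Hy; exact (cvx_cont f y Hcvx Hy)).
  intros a b Ha Hab e He.
  set (B := b * exp 1).
  assert (HE1 : 1 < exp 1) by (pose proof (exp_ineq1 1 ltac:(lra)); lra).
  assert (HB : 0 < B) by (unfold B; nra).
  destruct (hat_lip f B Hf HB) as [K [HK HL]].
  assert (Hd : 0 < e / (8 * (K * b + 1))).
  { apply Rdiv_lt_0_compat; [lra|]. assert (0 <= K * b) by nra. lra. }
  exists (Rmin (1/2) (e / (8 * (K * b + 1)))). split; [apply Rmin_glb_lt; lra|].
  intros eps [Heps1 Heps2] t Ht.
  assert (Hep1 : eps <= 1/2) by (pose proof (Rmin_l (1/2) (e / (8 * (K * b + 1)))); lra).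
  assert (Hep2 : eps < e / (8 * (K * b + 1))) by (pose proof (Rmin_r (1/2) (e / (8 * (K * b + 1)))); lra).
  destruct (exp_facts eps Heps1) as [E [E1 E2]].
  set (m := mollify phi f eps).
  assert (Hmc : F_convex_incr m) by (apply moll_convex; auto).
  set (s1 := exp (- eps) * t). set (s2 := exp eps * t).
  assert (Ht0 : 0 < t) by lra.
  assert (Hs1 : 0 < s1) by (unfold s1; nra).
  assert (Hs1t : s1 <= t) by (unfold s1; nra).
  assert (Hs2t : t <= s2) by (unfold s2; nra).
  assert (Hs2B : s2 <= B).
  { unfold s2, B. assert (exp eps <= exp 1) by (apply exp_le; lra). nra. }
  destruct (hat_bdd m Hmc t) as [Mm HMm].
  destruct (hat_spec m t Mm HMm) as [Um Lm].
  destruct (hat_bdd f Hf s1) as [M1 HM1]. destruct (hat_spec f s1 M1 HM1) as [U1 L1].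
  destruct (hat_bdd f Hf s2) as [M2 HM2]. destruct (hat_spec f s2 M2 HM2) as [U2 L2].
  assert (Up : conv_hat m t <= conv_hat f s2).
  { apply Lm. intros x Hx.
    pose proof (proj1 (moll_bounds phi f eps x Hm Hmono Hc Heps1 Hx)) as Hb. fold m in Hb.
    pose proof (U2 (x * exp (- eps)) ltac:(nra)) as H2.
    assert (x * t = x * exp (- eps) * s2) by (unfold s2; transitivity (x * t * (exp (- eps) * exp eps)); [rewrite E; ring| ring]).
    lra. }
  assert (Lo : conv_hat f s1 <= conv_hat m t).
  { apply L1. intros y Hy.
    assert (Hx : 0 < y * exp (- eps)) by nra.
    pose proof (proj2 (moll_bounds phi f eps _ Hm Hmono Hc Heps1 Hx)) as Hb. fold m in Hb.
    replace (y * exp (- eps) * exp eps) with y in Hb by (transitivity (y * (exp (- eps) * exp eps)); [rewrite E; ring| ring]).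
    pose proof (Um _ Hx). unfold s1. nra. }
  pose proof (hat_mono f s1 t Hf Hs1t). pose proof (hat_mono f t s2 Hf Hs2t).
  pose proof (HL s1 s2 Hs1 ltac:(lra) Hs2B).
  pose proof (exp_diff_bound eps ltac:(lra)).
  assert (K * (s2 - s1) <= K * b * (4 * eps)).
  { unfold s2, s1. replace (exp eps * t - exp (- eps) * t) with (t * (exp eps - exp (- eps))) by ring.
    rewrite Rmult_assoc. apply Rmult_le_compat_l; [lra|].
    apply Rmult_le_compat; nra. }
  assert (K * b * (4 * eps) < e).
  { assert (0 <= K * b) by nra.
    assert (eps * (8 * (K * b + 1)) < e).
    { apply (Rmult_lt_compat_r (8 * (K * b + 1))) in Hep2; [|lra].
      unfold Rdiv in Hep2. rewrite Rmult_assoc, Rinv_l, Rmult_1_r in Hep2; lra. }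
    nra. }
  fold m. apply Rabs_def1; lra.
Qed.

Theorem check_part phi f : mollifier phi -> F_concave_incr f ->
  unif_cvg_right0_compact (fun eps => conc_check (mollify phi f eps)) (conc_check f).
Proof.
  intros Hm Hf. pose proof Hf as [Hmono [Hcvx Hlim]].
  assert (Hc : forall y, 0 < y -> cont f y)
    by (intros y Hy; apply opp_cont; exact (cvx_cont _ y (conc_cvx f Hcvx) Hy)).
  intros a b Ha Hab e He.
  set (B := b * exp 1). set (A := a * exp (- 1)).
  assert (HE1 : 1 < exp 1) by (pose proof (exp_ineq1 1 ltac:(lra)); lra).
  assert (HA : 0 < A) by (unfold A; pose proof (exp_pos (-1)); nra).
  destruct (check_lip f A B Hf HA) as [K [HK HL]].
  assert (Hd : 0 < e / (8 * (K * b + 1))).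
  { apply Rdiv_lt_0_compat; [lra|]. assert (0 <= K * b) by nra. lra. }
  exists (Rmin (1/2) (e / (8 * (K * b + 1)))). split; [apply Rmin_glb_lt; lra|].
  intros eps [Heps1 Heps2] t Ht.
  assert (Hep1 : eps <= 1/2) by (pose proof (Rmin_l (1/2) (e / (8 * (K * b + 1)))); lra).
  assert (Hep2 : eps < e / (8 * (K * b + 1))) by (pose proof (Rmin_r (1/2) (e / (8 * (K * b + 1)))); lra).
  destruct (exp_facts eps Heps1) as [E [E1 E2]].
  set (m := mollify phi f eps).
  assert (Hmc : F_concave_incr m) by (apply moll_concave; auto).
  set (s1 := exp (- eps) * t). set (s2 := exp eps * t).
  assert (Ht0 : 0 < t) by lra.
  assert (Hs1 : 0 < s1) by (unfold s1; nra).
  assert (Hs1A : A <= s1).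
  { unfold s1, A. assert (exp (- 1) <= exp (- eps)) by (apply exp_le; lra).
    pose proof (exp_pos (-1)). nra. }
  assert (Hs1t : s1 <= t) by (unfold s1; nra).
  assert (Hs2t : t <= s2) by (unfold s2; nra).
  assert (Hs2B : s2 <= B).
  { unfold s2, B. assert (exp eps <= exp 1) by (apply exp_le; lra). nra. }
  destruct (check_bdd m t Hmc Ht0) as [Mm HMm].
  destruct (check_spec m t Mm HMm) as [Um Lm].
  destruct (check_bdd f s1 Hf Hs1) as [M1 HM1]. destruct (check_spec f s1 M1 HM1) as [U1 L1].
  destruct (check_bdd f s2 Hf ltac:(lra)) as [M2 HM2]. destruct (check_spec f s2 M2 HM2) as [U2 L2].
  assert (Lo : conc_check f s1 <= conc_check m t).
  { apply Lm. intros x Hx.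
    pose proof (proj2 (moll_bounds phi f eps x Hm Hmono Hc Heps1 Hx)) as Hb. fold m in Hb.
    pose proof (U1 (x * exp eps) ltac:(nra)) as H2.
    assert (x * t = x * exp eps * s1) by (unfold s1; transitivity (x * t * (exp (- eps) * exp eps)); [rewrite E; ring| ring]).
    lra. }
  assert (Up : conc_check m t <= conc_check f s2).
  { apply L2. intros y Hy.
    assert (Hx : 0 < y * exp eps) by nra.
    pose proof (proj1 (moll_bounds phi f eps _ Hm Hmono Hc Heps1 Hx)) as Hb. fold m in Hb.
    replace (y * exp eps * exp (- eps)) with y in Hb by (transitivity (y * (exp (- eps) * exp eps)); [rewrite E; ring| ring]).
    pose proof (Um _ Hx). unfold s2. nra. }
  pose proof (check_mono f s1 t Hf Hs1 Hs1t). pose proof (check_mono f t s2 Hf Ht0 Hs2t).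
  pose proof (HL s1 s2 Hs1A ltac:(lra) Hs2B).
  pose proof (exp_diff_bound eps ltac:(lra)).
  assert (K * (s2 - s1) <= K * b * (4 * eps)).
  { unfold s2, s1. replace (exp eps * t - exp (- eps) * t) with (t * (exp eps - exp (- eps))) by ring.
    rewrite Rmult_assoc. apply Rmult_le_compat_l; [lra|].
    apply Rmult_le_compat; nra. }
  assert (K * b * (4 * eps) < e).
  { assert (0 <= K * b) by nra.
    assert (eps * (8 * (K * b + 1)) < e).
    { apply (Rmult_lt_compat_r (8 * (K * b + 1))) in Hep2; [|lra].
      unfold Rdiv in Hep2. rewrite Rmult_assoc, Rinv_l, Rmult_1_r in Hep2; lra. }
    nra. }
  fold m. apply Rabs_def1; lra.
Qed.

Theorem lemmaA3 (phi : R -> R) :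
  mollifier phi ->
  (forall f : R -> R, F_convex_incr f ->
     (forall eps, 0 < eps -> F_convex_incr (mollify phi f eps)) /\
     unif_cvg_right0_compact (fun eps => conv_hat (mollify phi f eps)) (conv_hat f)) /\
  (forall f : R -> R, F_concave_incr f ->
     (forall eps, 0 < eps -> F_concave_incr (mollify phi f eps)) /\
     unif_cvg_right0_compact (fun eps => conc_check (mollify phi f eps)) (conc_check f)).
Proof.
  intros Hm. split; intros f Hf; split.
  - intros eps He. apply moll_convex; auto.
  - apply hat_part; auto.
  - intros eps He. apply moll_concave; auto.
  - apply check_part; auto.
Qed.
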